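(* There exists a decreasing sequence $(T_k)_{k\in\mathbb{N}}$ of compact subsets of $\mathbb{R}^2$ such that: (i) $T_0$ is the closed unit disk $\{x:\|x\|\le1\}$; (ii) $T_{k+1}\subset\operatorname{int}T_k$ for every $k\in\mathbb{N}$; (iii) $\bigcap_{k\in\mathbb{N}}T_k$ is the closed disk $\{x:\|x\|\le r\}$ for some $r>0$; (iv) $\sum_{k=0}^{+\infty}\operatorname{Dist}(T_k,T_{k+1})=+\infty$.
   Context: $\operatorname{Dist}(S_1,S_2)=\max\{\sup_{x\in S_1}\operatorname{dist}(x,S_2),\sup_{x\in S_2}\operatorname{dist}(x,S_1)\}$ is the Hausdorff distance, with $\operatorname{dist}(x,S)=\inf_{y\in S}\|x-y\|$. *)

(* Defs.v *)
From HB Require Import structures.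
From mathcomp Require Import all_boot all_order all_algebra.
From mathcomp Require Import all_classical all_reals all_analysis.
From mathcomp Require Import Rstruct Rstruct_topology.
From Stdlib Require Reals.
Notation R := Rdefinitions.R.
Set Implicit Arguments. Unset Strict Implicit. Unset Printing Implicit Defensive.
Import Order.TTheory GRing.Theory Num.Theory.
Local Open Scope classical_set_scope.
Local Open Scope ring_scope.

(* The plane R^2 is modelled as R * R (product topology = Euclidean topology). *)
Definition pt := (R * R)%type.

Definition enorm (x : pt) : R := Num.sqrt (x.1 ^+ 2 + x.2 ^+ 2).

(* dist(x,S) = inf_{y in S} ||x - y||, as an extended real (+oo if S empty). *)
Definition edist (x : pt) (S : set pt) : \bar R :=
  ereal_inf [set (enorm (x.1 - y.1, x.2 - y.2))%:E | y in S].

Definition Dist (S1 S2 : set pt) : \bar R :=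
  maxe (ereal_sup [set edist x S2 | x in S1])
       (ereal_sup [set edist x S1 | x in S2]).

Definition cdisk (r : R) : set pt := [set x | enorm x <= r].

(* Main.v *)
Require Import Defs.
From HB Require Import structures.
From mathcomp Require Import all_boot all_order all_algebra.
From mathcomp Require Import all_classical all_reals all_analysis.
From mathcomp Require Import Rstruct Rstruct_topology.
From mathcomp Require Import ring lra.
Import Order.TTheory GRing.Theory Num.Theory.
Local Open Scope classical_set_scope.
Local Open Scope ring_scope.
Fixpoint gen (k : nat) : nat * nat :=
  if k is k'.+1 then
    let: (m, i) := gen k' in if (i.+1 < 2 ^ m)%N then (m, i.+1) else (m.+1, 0%N)
  else (0%N, 0%N).

Lemma gen_succ k : gen k.+1 =
  if ((gen k).2.+1 < 2 ^ (gen k).1)%N then ((gen k).1, (gen k).2.+1)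
  else ((gen k).1.+1, 0%N).
Proof. by rewrite /=; case: (gen k). Qed.

Lemma gen_inv k : ((gen k).2 < 2 ^ (gen k).1)%N /\ (2 ^ (gen k).1 + (gen k).2 = k.+1)%N.
Proof.
elim: k => [|k [IH1 IH2]]; first by [].
rewrite gen_succ; case: ifP => /= h.
  by split => //; rewrite addnS IH2.
split; first by rewrite expn_gt0.
have e : (gen k).2.+1 = (2 ^ (gen k).1)%N.
  by apply/eqP; rewrite eqn_leq IH1 leqNgt h.
by rewrite addn0 expnS mul2n -addnn -{2}e addnS IH2.
Qed.

Definition Pk k : R := (2 ^ (gen k).1)%:R.
Definition Ik k : R := ((gen k).2)%:R.
Definition clamp (u : R) : R := Num.min 1 (Num.max 0 u).
Definition Fk (k : nat) (t : R) : R :=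
  if k is 0 then 1 else
  2^-1 + (4 * k.+1%:R)^-1 + (1 + clamp (8 * Pk k * t - 2 * Ik k)) / (8 * Pk k).
Definition TT (k : nat) : set pt := [set x | enorm x <= Fk k x.1].

Lemma clamp_ge0 u : 0 <= clamp u.
Proof. by rewrite /clamp le_min ler01 le_max lexx. Qed.
Lemma clamp_le1 u : clamp u <= 1.
Proof. by rewrite /clamp ge_min lexx. Qed.
Lemma clamp_le u v : u <= v -> clamp u <= clamp v.
Proof.
move=> uv; rewrite /clamp le_min !ge_min lexx /= ge_max !le_max lexx /=.
by rewrite uv !orbT.
Qed.
Lemma clamp_neg u : u <= 0 -> clamp u = 0.
Proof. by move=> h; rewrite /clamp (max_l h) (min_r ler01). Qed.
Lemma clamp1 : clamp 1 = 1.
Proof. by rewrite /clamp (max_r ler01) minxx. Qed.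
Lemma Pk_ge1 k : 1 <= Pk k.
Proof. by rewrite /Pk ler1n expn_gt0. Qed.
Lemma Pk_gt0 k : 0 < Pk k.
Proof. exact: lt_le_trans ltr01 (Pk_ge1 k). Qed.
Lemma Pk_le k : Pk k <= k.+1%:R.
Proof. by rewrite /Pk ler_nat -(gen_inv k).2 leq_addr. Qed.
Lemma Pk_lt k : k.+1%:R < 2 * Pk k.
Proof.
rewrite /Pk -natrM ltr_nat -(gen_inv k).2 mul2n -addnn ltn_add2l; exact: (gen_inv k).1.
Qed.
Lemma Ik_ge0 k : 0 <= Ik k.
Proof. by rewrite /Ik ler0n. Qed.
Lemma Ik_lt k : Ik k + 1 <= Pk k.
Proof. by rewrite /Ik /Pk natr1 ler_nat; exact: (gen_inv k).1. Qed.

Lemma gen_case k :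
  (Pk k.+1 = Pk k /\ Ik k.+1 = Ik k + 1) \/ Pk k.+1 = 2 * Pk k.
Proof.
rewrite /Pk /Ik gen_succ; case: ifP => _ /=; first by left; rewrite natr1.
by right; rewrite expnS natrM.
Qed.

Lemma Fk_ge k t : 2^-1 < Fk k t.
Proof.
case: k => [|k] /=; first by lra.
have := Pk_gt0 k.+1; have := clamp_ge0 (8 * Pk k.+1 * t - 2 * Ik k.+1).
set c := clamp _; set P := Pk _ => c0 P0.
have h1 : 0 < (4 * k.+2%:R)^-1 :> R by rewrite invr_gt0 mulr_gt0 // ltr0n.
have h2 : 0 < (1 + c) / (8 * P).
    rewrite divr_gt0 //; lra.
move: h1 h2; move: ((4 * k.+2%:R)^-1) ((1+c)/(8*P)) => a b; lra.
Qed.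

Lemma Fk_le k t : Fk k t <= 2^-1 + k.+1%:R^-1.
Proof.
case: k => [|k] /=; first by rewrite invr1; lra.
have := Pk_lt k.+1; have := clamp_le1 (8 * Pk k.+1 * t - 2 * Ik k.+1).
have := clamp_ge0 (8 * Pk k.+1 * t - 2 * Ik k.+1).
have := Pk_gt0 k.+1.
set c := clamp _; set P := Pk _; clearbody c P =>  P0 c0 c1 Plt.
have k0 : 0 < k.+2%:R :> R by rewrite ltr0n.
have e1 : (4 * k.+2%:R)^-1 = k.+2%:R^-1 / 4 :> R.
  by rewrite invfM mulrC.
have e3 : (2 * P)^-1 < k.+2%:R^-1.
  by rewrite ltf_pV2 ?posrE ?mulr_gt0.
have e4 : (1 + c) / (8 * P) = (1 + c) / 4 * (2 * P)^-1.
  rewrite !invfM; field. by rewrite gt_eqF.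
have e5 : 0 < (2 * P)^-1 by rewrite invr_gt0 mulr_gt0.
rewrite e1 e4.
move: e3 e5; move: ((2 * P)^-1) (k.+2%:R^-1) => u w; nra.
Qed.

Lemma Fk_lt1 k t : Fk k.+1 t <= 7 / 8.
Proof.
rewrite /=.
have := Pk_ge1 k.+1; have := clamp_le1 (8 * Pk k.+1 * t - 2 * Ik k.+1).
have := clamp_ge0 (8 * Pk k.+1 * t - 2 * Ik k.+1).
set c := clamp _; set P := Pk _; clearbody c P =>  c0 c1 P1.
have e1 : (4 * k.+2%:R)^-1 <= 8^-1 :> R.
  rewrite lef_pV2 ?posrE ?mulr_gt0 ?ltr0n //.
  have : 2 <= k.+2%:R :> R by rewrite ler_nat.
  lra.
have e2 : (1 + c) / (8 * P) <= 4^-1.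
  rewrite ler_pdivrMr ?mulr_gt0 //; last lra.
  nra.
move: e1 e2; move: ((4 * k.+2%:R)^-1) ((1 + c) / (8 * P)) => a b; lra.
Qed.
Lemma eps_decr k : (4 * k.+2%:R)^-1 < (4 * k.+1%:R)^-1 :> R.
Proof.
rewrite ltf_pV2 ?posrE ?mulr_gt0 ?ltr0n //.
rewrite ltr_pM2l ?ltr0n // ltr_nat //.
Qed.

Lemma Fk_decr k t : Fk k.+1 t < Fk k t.
Proof.
case: k => [|k]; first by have := Fk_lt1 0 t; rewrite /=; lra.
have epsd := eps_decr k.+1.
have : (1 + clamp (8 * Pk k.+2 * t - 2 * Ik k.+2)) / (8 * Pk k.+2) <=
       (1 + clamp (8 * Pk k.+1 * t - 2 * Ik k.+1)) / (8 * Pk k.+1).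
  have P0 := Pk_gt0 k.+1.
  case: (gen_case k.+1) => [[-> ->]|->].
    rewrite ler_pM2r ?invr_gt0 ?mulr_gt0 // lerD2l; apply: clamp_le; lra.
  have := clamp_le1 (8 * (2 * Pk k.+1) * t - 2 * Ik k.+2).
  have := clamp_ge0 (8 * Pk k.+1 * t - 2 * Ik k.+1).
  set c := clamp _; set d := clamp _; clearbody c d => c0 d1.
  rewrite ler_pdivrMr ?mulr_gt0 //.
  rewrite mulrAC ler_pdivlMr ?mulr_gt0 //.
  nra.
move: epsd; rewrite /=.
move: ((1 + clamp (8 * Pk k.+2 * t - 2 * Ik k.+2)) / (8 * Pk k.+2)).
move: ((1 + clamp (8 * Pk k.+1 * t - 2 * Ik k.+1)) / (8 * Pk k.+1)).
move: ((4 * k.+3%:R)^-1) ((4 * k.+2%:R)^-1) => a b x y.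
lra.
Qed.
Definition tk k : R := (2 * Ik k + 1) / (8 * Pk k).

Lemma tk_bounds k : 0 <= tk k <= 4^-1.
Proof.
rewrite /tk; have P0 := Pk_gt0 k; have I0 := Ik_ge0 k; have IP := Ik_lt k.
apply/andP; split; first by rewrite divr_ge0 //; lra.
rewrite ler_pdivrMr ?mulr_gt0 //; lra.
Qed.

Lemma Fk_tk k : Fk k.+1 (tk k.+1) = 2^-1 + (4 * k.+2%:R)^-1 + 4^-1 / Pk k.+1.
Proof.
rewrite /= /tk.
have P0 := Pk_gt0 k.+1.
have -> : 8 * Pk k.+1 * ((2 * Ik k.+1 + 1) / (8 * Pk k.+1)) - 2 * Ik k.+1 = 1.
  by field; rewrite gt_eqF.
rewrite clamp1; congr (_ + _); field; rewrite gt_eqF //.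
Qed.

Lemma Fk_near k (s : R) : `|s - tk k.+1| < (8 * Pk k.+1)^-1 ->
  Fk k.+2 s <= 2^-1 + (4 * k.+3%:R)^-1 + (8 * Pk k.+1)^-1.
Proof.
move=> hs; rewrite [Fk k.+2 s]/= lerD2l.
have P0 := Pk_gt0 k.+1.
case: (gen_case k.+1) => [[-> ->]|->].
  rewrite clamp_neg ?addr0 ?div1r //.
  move: hs; rewrite /tk ltr_norml => /andP[_ h].
  have e : (2 * Ik k.+1 + 1) / (8 * Pk k.+1) + (8 * Pk k.+1)^-1 =
           (2 * (Ik k.+1 + 1)) / (8 * Pk k.+1) by field; rewrite gt_eqF.
  have h2 : s < 2 * (Ik k.+1 + 1) / (8 * Pk k.+1) by rewrite -e; lra.
  move: h2; rewrite ltr_pdivlMr ?mulr_gt0 // => h2.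
  by rewrite subr_le0; apply: ltW; rewrite mulrC.
have := clamp_le1 (8 * (2 * Pk k.+1) * s - 2 * Ik k.+2).
set c := clamp _; clearbody c => c1.
rewrite ler_pdivrMr ?mulr_gt0 //.
have -> : (8 * Pk k.+1)^-1 * (8 * (2 * Pk k.+1)) = 2 by field; rewrite gt_eqF.
lra.
Qed.
Lemma enorm_ge0 x : 0 <= enorm x.
Proof. exact: sqrtr_ge0. Qed.

Lemma enorm_ge1 (x : pt) : `|x.1| <= enorm x.
Proof.
rewrite /enorm -sqrtr_sqr ler_sqrt; last by rewrite addr_ge0 // sqr_ge0.
by rewrite lerDl sqr_ge0.
Qed.

Lemma enorm_add (a1 a2 b1 b2 : R) :
  enorm (a1 + b1, a2 + b2) <= enorm (a1, a2) + enorm (b1, b2).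
Proof.
rewrite /enorm /=.
have hA : 0 <= a1 ^+ 2 + a2 ^+ 2 by rewrite addr_ge0 // sqr_ge0.
have hB : 0 <= b1 ^+ 2 + b2 ^+ 2 by rewrite addr_ge0 // sqr_ge0.
set A := Num.sqrt (a1 ^+ 2 + a2 ^+ 2); set B := Num.sqrt (b1 ^+ 2 + b2 ^+ 2).
have A0 : 0 <= A := sqrtr_ge0 _.
have B0 : 0 <= B := sqrtr_ge0 _.
rewrite -(ger0_norm (addr_ge0 A0 B0)) -sqrtr_sqr ler_sqrt; last by rewrite sqr_ge0.
have AB : a1 * b1 + a2 * b2 <= A * B.
  rewrite /A /B -sqrtrM // (le_trans (ler_norm _)) // -sqrtr_sqr ler_sqrt;
    last by rewrite mulr_ge0.
  rewrite -subr_ge0.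
  have -> : (a1 ^+ 2 + a2 ^+ 2) * (b1 ^+ 2 + b2 ^+ 2) - (a1 * b1 + a2 * b2) ^+ 2
     = (a1 * b2 - a2 * b1) ^+ 2 by ring.
  exact: sqr_ge0.
have eA : A ^+ 2 = a1 ^+ 2 + a2 ^+ 2 by rewrite sqr_sqrtr.
have eB : B ^+ 2 = b1 ^+ 2 + b2 ^+ 2 by rewrite sqr_sqrtr.
have -> : (A + B) ^+ 2 = A ^+ 2 + B ^+ 2 + 2 * (A * B) by ring.
rewrite eA eB. clearbody A B. nra.
Qed.

Lemma enorm_tri (p y : pt) : enorm p - enorm y <= enorm (p.1 - y.1, p.2 - y.2).
Proof.
rewrite lerBlDr; have := enorm_add (p.1 - y.1) (p.2 - y.2) y.1 y.2.
by rewrite !subrK; case: p.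
Qed.

Lemma enorm_mk (a F : R) : 0 <= F -> a ^+ 2 <= F ^+ 2 ->
  enorm (a, Num.sqrt (F ^+ 2 - a ^+ 2)) = F.
Proof.
move=> F0 h; rewrite /enorm /= sqr_sqrtr ?subr_ge0 //.
by rewrite addrC subrK sqrtr_sqr ger0_norm.
Qed.
Lemma Dist_lb (S1 S2 : set pt) (p : pt) (d : R) : S1 p ->
  (forall y, S2 y -> d <= enorm (p.1 - y.1, p.2 - y.2)) -> (d%:E <= Dist S1 S2)%E.
Proof.
move=> S1p h; rewrite /Dist le_max; apply/orP; left.
have h1 : (d%:E <= Defs.edist p S2)%E.
  apply/ereal_infP => _ [y S2y <-].
  by rewrite lee_fin; apply: h.
apply: (le_trans h1).
by apply: ereal_sup_ubound; exists p.
Qed.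
Lemma Dist_step k : (((8 * k.+1%:R)^-1)%:E <= Dist (TT k) (TT k.+1))%E.
Proof.
case: k => [|k].
  apply: (@Dist_lb _ _ (1, 0)).
    rewrite /TT /= /enorm /= expr0n /= addr0 expr1n sqrtr1; lra.
  move=> y; rewrite /TT /= => hy.
  have := Fk_lt1 0 y.1; have := enorm_tri (1, 0) y.
  have -> : enorm (1, 0) = 1 by rewrite /enorm /= expr0n /= addr0 expr1n sqrtr1.
  rewrite /= mulr1 => h1 h2.
  have -> : (8 : R)^-1 = 1 - 7 / 8 by field.
  move: h1 h2 hy; move: (enorm (1 - y.1, 0 - y.2)) (enorm y) (Fk 1 y.1) => a b c.
  lra.
set P := Pk k.+1.
have P0 : 0 < P := Pk_gt0 _.
have dle : (8 * k.+2%:R)^-1 <= (8 * P)^-1.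
  have h8P : 0 < 8 * P by rewrite mulr_gt0.
  have h8k : 0 < 8 * k.+2%:R :> R by rewrite mulr_gt0 ?ltr0n.
  rewrite lef_pV2 ?posrE //.
  have := Pk_le k.+1; rewrite -/P; lra.
have [t0 t1] := andP (tk_bounds k.+1).
have FE : Fk k.+1 (tk k.+1) = 2^-1 + (4 * k.+2%:R)^-1 + 4^-1 / P by rewrite Fk_tk.
have Fge := Fk_ge k.+1 (tk k.+1).
have Fnear := @Fk_near k; rewrite -/P in Fnear.
move: t0 t1 FE Fge Fnear.
set t := tk k.+1; set F := Fk k.+1 t.
have Fdef : Fk k.+1 t = F by [].
clearbody t F => t0 t1 FE Fge Fnear.
have F0 : 0 <= F by lra.
have tF : t ^+ 2 <= F ^+ 2.
  rewrite ler_sqr ?nnegrE //; lra.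
apply: (@Dist_lb _ _ (t, Num.sqrt (F ^+ 2 - t ^+ 2))).
  by change (enorm (t, Num.sqrt (F ^+ 2 - t ^+ 2)) <= Fk k.+1 t); rewrite enorm_mk // Fdef.
move=> y hy0; have hy : enorm y <= Fk k.+2 y.1 := hy0; clear hy0.
case: (ltP `|y.1 - t| (8 * P)^-1) => hn.
  have hF := Fnear _ hn.
  have := enorm_tri (t, Num.sqrt (F ^+ 2 - t ^+ 2)) y.
  rewrite enorm_mk //= => htri.
  have := eps_decr k.+1.
  have e : 4^-1 / P = 2 * (8 * P)^-1 by field; rewrite gt_eqF.
  move: FE; rewrite e.
  move: htri hF hy dle.
  move: (enorm _) (enorm y) (Fk k.+2 y.1) ((4 * k.+3%:R)^-1) ((4 * k.+2%:R)^-1) ((8 * P)^-1) ((8 * k.+2%:R)^-1).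
  move=> a b c e1 e2 u d; lra.
apply: (le_trans dle); apply: (le_trans hn).
by rewrite distrC; have := enorm_ge1 (t - y.1, Num.sqrt (F ^+ 2 - t ^+ 2) - y.2).
Qed.
Lemma clamp_cont : continuous clamp.
Proof.
move=> u.
apply: (@continuous_min _ R^o (fun=> 1) (fun v => Num.max 0 v)).
  exact: cvg_cst.
apply: (@continuous_max _ R^o (fun=> 0) id).
  exact: cvg_cst.
exact: cvg_id.
Qed.

Lemma enorm_cont : continuous enorm.
Proof.
move=> x; rewrite /enorm.
apply: (@continuous_comp _ _ _ (fun x : pt => x.1^+2 + x.2^+2) Num.sqrt); last exact: sqrt_continuous.
have h1 : (fun y : pt => y.1) @ x --> x.1 by exact: cvg_fst.
have h2 : (fun y : pt => y.2) @ x --> x.2 by exact: cvg_snd.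
apply: (@cvgD _ R^o).
  rewrite expr2. exact: (cvgM h1 h1).
rewrite expr2. exact: (cvgM h2 h2).
Qed.

Lemma F_cont k : continuous (fun t : R => Fk k t).
Proof.
move=> t.
case: k => [|k]; first exact: cvg_cst.
have hid : (fun y : R => y) @ t --> t by exact: cvg_id.
have h1 : (fun y : R => 8 * Pk k.+1 * y) @ t --> 8 * Pk k.+1 * t.
  have hc : (fun y : R => 8 * Pk k.+1) @ t --> 8 * Pk k.+1 by exact: cvg_cst.
  exact: (cvgM hc hid).
have h2 : (fun y : R => 8 * Pk k.+1 * y - 2 * Ik k.+1) @ t --> 8 * Pk k.+1 * t - 2 * Ik k.+1.
  apply: (@cvgD _ R^o); [exact: h1 | exact: cvg_cst].
have h3 : (fun y : R => clamp (8 * Pk k.+1 * y - 2 * Ik k.+1)) @ t --> clamp (8 * Pk k.+1 * t - 2 * Ik k.+1).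
  exact: (continuous_comp h2 (@clamp_cont _)).
have h4 : (fun y : R => 1 + clamp (8 * Pk k.+1 * y - 2 * Ik k.+1)) @ t --> 1 + clamp (8 * Pk k.+1 * t - 2 * Ik k.+1).
  apply: (@cvgD _ R^o); [exact: cvg_cst | exact: h3].
have hc2 : (fun y : R => (8 * Pk k.+1)^-1) @ t --> (8 * Pk k.+1)^-1 by exact: cvg_cst.
have h5 := cvgM h4 hc2.
apply: (@cvgD _ R^o); [exact: cvg_cst | exact: h5].
Qed.

Lemma g_cont k : continuous (fun x : pt => enorm x - Fk k x.1).
Proof.
move=> x.
have h1 : (fun y : pt => y.1) @ x --> x.1 by exact: cvg_fst.
have hF : (fun y : pt => Fk k y.1) @ x --> Fk k x.1.
  exact: (continuous_comp h1 (@F_cont k _)).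
apply: (@cvgB _ R^o); [exact: enorm_cont | exact: hF].
Qed.

Lemma TT_closed k : closed (TT k).
Proof.
have -> : TT k = (fun x : pt => enorm x - Fk k x.1) @^-1` [set r : R | r <= 0].
  by apply/seteqP; split => x /=; rewrite /TT /= subr_le0.
apply: preimage_closed; last exact: closed_le.
move=> x _; exact: g_cont.
Qed.

Lemma TT_int k : TT k.+1 `<=` (TT k)°.
Proof.
have hO : open [set x : pt | enorm x - Fk k x.1 < 0].
  have -> : [set x : pt | enorm x - Fk k x.1 < 0] =
     (fun x : pt => enorm x - Fk k x.1) @^-1` [set r : R | r < 0] by [].
  apply: open_comp; last exact: open_lt.
  move=> x _; exact: g_cont.
have sub : [set x : pt | enorm x - Fk k x.1 < 0] `<=` TT k.
  by move=> x /=; rewrite subr_lt0 => /ltW.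
rewrite (open_subsetE _ hO) in sub.
move=> x hx0; have hx : enorm x <= Fk k.+1 x.1 := hx0.
apply: sub; change (enorm x - Fk k x.1 < 0).
have := Fk_decr k x.1; move: hx.
move: (enorm x) (Fk k.+1 x.1) (Fk k x.1) => a b c; lra.
Qed.
Lemma enorm_ge2 (x : pt) : `|x.2| <= enorm x.
Proof. by have := enorm_ge1 (x.2, x.1); rewrite /enorm /= addrC. Qed.

Lemma TT_compact k : compact (TT k).
Proof.
apply: (subclosed_compact (TT_closed k) (compact_setX (@segment_compact R (-2) 2) (@segment_compact R (-2) 2))).
move=> x hx0; have hx : enorm x <= Fk k x.1 := hx0.
have hb := Fk_le k x.1.
have hk : k.+1%:R^-1 <= 1 :> R by rewrite invf_le1 ?ler1n ?ltr0n.
have h2 : enorm x <= 2.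
  move: hx hb hk; move: (enorm x) (Fk k x.1) (k.+1%:R^-1) => a b c; lra.
split => /=; rewrite in_itv /= -ler_norml.
  exact: le_trans (enorm_ge1 x) h2.
exact: le_trans (enorm_ge2 x) h2.
Qed.

Lemma TT_cap : \bigcap_k TT k = cdisk (2^-1).
Proof.
apply/seteqP; split => x /=.
  move=> hx; rewrite /cdisk /=.
  rewrite leNgt; apply/negP => hlt.
  set e := enorm x - 2^-1.
  have e0 : 0 < e by rewrite /e subr_gt0.
  have ei : 0 < e^-1 by rewrite invr_gt0.
  have hb := archi_boundP (ltW ei).
  set n := Num.Def.archi_bound _ in hb.
  have hx' : enorm x <= Fk n x.1 := hx n I.
  have := Fk_le n x.1.
  have : n.+1%:R^-1 < e.
    rewrite -[e]invrK ltf_pV2 ?posrE ?invr_gt0 ?ltr0n //.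
    apply: (lt_le_trans hb); rewrite ler_nat; exact: leqnSn.
  move: hx'; rewrite /e; move: (Fk n x.1) (n.+1%:R^-1) => a b; lra.
move=> hx k _; have hx' : enorm x <= 2^-1 := hx.
suff : enorm x <= Fk k x.1 by [].
have := Fk_ge k x.1; move: hx'; move: (Fk k x.1) => a; lra.
Qed.

Lemma dvg_sum : (fun n : nat => (\sum_(0 <= k < n) Dist (TT k) (TT k.+1))%E) @ \oo --> +oo%E.
Proof.
have hH : series (@harmonic R) @ \oo --> +oo.
  apply: nondecreasing_dvgn_lt; last exact: dvg_harmonic.
  rewrite /series /=.
  apply: (@nondecreasing_series _ _ predT 0) => n _ _; exact: harmonic_ge0.
pose u n : R := \sum_(0 <= k < n) (8 * k.+1%:R)^-1.
have hu : u @ \oo --> +oo.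
  apply/cvgryPge => A.
  move/cvgryPge: hH => /(_ (8 * A)).
  apply: filterS => n hn.
  have -> : u n = 8^-1 * series (@harmonic R) n.
    rewrite /u /series /= mulr_sumr; apply: eq_bigr => i _.
    by rewrite invfM.
  rewrite -[A](mulKf (_ : (8 : R) != 0)) ?ler_pM2l ?invr_gt0 //.
apply: (@gee_cvgy _ _ _ _ (fun n => (u n)%:E)).
  apply: nearW => n; rewrite /u -sumEFin.
  apply: lee_sum => k _; exact: Dist_step.
by apply/cvgeryP.
Qed.

Theorem lemma4p10 :
  exists T : nat -> set pt,
    (forall k, compact (T k)) /\
    (forall k, T k.+1 `<=` T k) /\
    T 0%N = cdisk 1 /\
    (forall k, T k.+1 `<=` (T k)°) /\
    (exists r : R, 0 < r /\ \bigcap_k T k = cdisk r) /\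
    ((fun n : nat => (\sum_(0 <= k < n) Dist (T k) (T k.+1))%E) @ \oo --> +oo%E).
Proof.
exists TT; split; first exact: TT_compact.
split; first by move=> k x /TT_int /interior_subset.
split; first by [].
split; first exact: TT_int.
split; last exact: dvg_sum.
by exists 2^-1; split; [rewrite invr_gt0 ltr0n | exact: TT_cap].
Qed.
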